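(* Assume in addition that $\lambda_A>0$ (the dataset need not be balanced). Let $\alpha=\lambda_A/32$ and $M=32/\lambda_A^2$ (assumed to be an integer). Then the iterates of TD-SVRG (Algorithm 1) satisfy, for every $m\ge0$, $$\mathbb E\big[\|\tilde\theta_m-\theta^*\|^2\big]\le\left(\tfrac57\right)^m\|\tilde\theta_0-\theta^*\|^2.$$
   Context: Finite-sample setting. Let $\mathcal S$ be a finite state space, $\phi:\mathcal S\to\mathbb R^d$ a feature map with $\|\phi(s)\|_2\le 1$ for all $s$, $r:\mathcal S\times\mathcal S\to\mathbb R$ a reward function and $\gamma\in[0,1)$. For a pair of states $(s,s')$ and $\theta\in\mathbb R^d$ let $g_{s,s'}(\theta)=(r(s,s')+\gamma\phi(s')^T\theta-\phi(s)^T\theta)\phi(s)$. A dataset is a state trajectory $s_1,\dots,s_{N+1}$, giving the $N$ pairs $(s_t,s_{t+1})$, $t=1,\dots,N$. Let $A_d=\frac1N\sum_{t=1}^N\phi(s_t)(\phi(s_t)-\gamma\phi(s_{t+1}))^T$ and $b_d=\frac1N\sum_{t=1}^N r(s_t,s_{t+1})\phi(s_t)$, so that $\bar g(\theta):=\frac1N\sum_{t=1}^N g_{s_t,s_{t+1}}(\theta)=-A_d\theta+b_d$. Assume $A_d$ is nonsingular and let $\theta^*=A_d^{-1}b_d$. Let $\lambda_A$ denote the minimum eigenvalue of $(A_d+A_d^T)/2$. Algorithm 1 (TD-SVRG): given $\alpha>0$, an integer $M\ge1$ and an initial $\tilde\theta_0\in\mathbb R^d$, for epochs $m=1,2,\dots$: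 set $\tilde\theta=\tilde\theta_{m-1}$, compute $\bar g(\tilde\theta)$, set $\theta_0=\tilde\theta$; for $t=1,\dots,M$ draw an index $i_t$ uniformly from $\{1,\dots,N\}$, independently of everything else, put $(s,s')=(s_{i_t},s_{i_t+1})$, $v_t=g_{s,s'}(\theta_{t-1})-g_{s,s'}(\tilde\theta)+\bar g(\tilde\theta)$ and $\theta_t=\theta_{t-1}+\alpha v_t$; finally set $\tilde\theta_m=\theta_{t'}$ where $t'$ is drawn uniformly from $\{0,\dots,M-1\}$ independently of everything else. *)

(* Defs.v *)
From HB Require Import structures.
From mathcomp Require Import all_boot all_order all_algebra.
From mathcomp Require Import reals.
Set Implicit Arguments. Unset Strict Implicit. Unset Printing Implicit Defensive.
Import Order.TTheory GRing.Theory Num.Theory.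
Local Open Scope ring_scope.

Section TDSVRG.
Variables (R : realType) (S : finType) (d : nat).

Definition dotv (u v : 'cV[R]_d) : R := (u^T *m v) 0 0.
Definition sqnorm (v : 'cV[R]_d) : R := \sum_(i < d) v i 0 ^+ 2.

Definition is_min_eigenvalue (B : 'M[R]_d) (l : R) : Prop :=
  eigenvalue B l /\ (forall mu, eigenvalue B mu -> l <= mu).

Definition sym_part (B : 'M[R]_d) : 'M[R]_d := 2^-1 *: (B + B^T).

Variables (phi : S -> 'cV[R]_d) (r : S -> S -> R) (gamma : R).

Definition gTD (x x' : S) (theta : 'cV[R]_d) : 'cV[R]_d :=
  (r x x' + gamma * dotv (phi x') theta - dotv (phi x) theta) *: phi x.

(* Dataset: trajectory s_0, ..., s_N (0-indexed), giving the N pairs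
   (s_t, s_{t+1}), t : 'I_N. *)
Variables (N : nat) (s : 'I_N.+1 -> S).

Definition st (t : 'I_N) : S := s (widen_ord (leqnSn N) t).
Definition st1 (t : 'I_N) : S := s (lift ord0 t).

Definition A_d : 'M[R]_d :=
  N%:R^-1 *: \sum_(t < N) (phi (st t) *m (phi (st t) - gamma *: phi (st1 t))^T).
Definition b_d : 'cV[R]_d :=
  N%:R^-1 *: \sum_(t < N) (r (st t) (st1 t) *: phi (st t)).
Definition gbar (theta : 'cV[R]_d) : 'cV[R]_d :=
  N%:R^-1 *: \sum_(t < N) gTD (st t) (st1 t) theta.
Definition theta_star : 'cV[R]_d := invmx A_d *m b_d.

Variables (alpha : R) (M : nat).

(* Randomness of one epoch: the M indices i_1..i_M (uniform in 'I_N) and t'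
   (uniform in 'I_M), all independent. *)
Definition Omega : finType := (M.-tuple 'I_N * 'I_M)%type.

Definition inner_step (tt : 'cV[R]_d) (theta : 'cV[R]_d) (i : 'I_N) : 'cV[R]_d :=
  theta + alpha *: (gTD (st i) (st1 i) theta - gTD (st i) (st1 i) tt + gbar tt).

(* one epoch: from theta_tilde_{m-1} to theta_tilde_m = theta_{t'} *)
Definition epoch (tt : 'cV[R]_d) (w : Omega) : 'cV[R]_d :=
  foldl (inner_step tt) tt (take w.2 (tval w.1)).

Definition run (theta0 : 'cV[R]_d) (m : nat) (ws : m.-tuple Omega) : 'cV[R]_d :=
  foldl epoch theta0 ws.

(* Expectation of f(theta_tilde_m): uniform average over the finite product
   probability space of the m epochs. *)
Definition Exp_iter (m : nat) (f : 'cV[R]_d -> R) (theta0 : 'cV[R]_d) : R :=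
  (#|{: m.-tuple Omega}|%:R)^-1 * \sum_(ws : m.-tuple Omega) f (run theta0 ws).

End TDSVRG.

(* Main.v *)
Require Import Defs.
From HB Require Import structures.
From mathcomp Require Import all_boot all_order all_algebra.
From mathcomp Require Import reals.
From mathcomp Require Import complex spectral ring lra.
Import Order.TTheory GRing.Theory Num.Theory.
Local Open Scope ring_scope.


Lemma dotvE {R : realType} {d : nat} (u v : 'cV[R]_d) : dotv u v = \sum_i u i 0 * v i 0.
Proof. by rewrite /dotv mxE; apply: eq_bigr => i _; rewrite mxE. Qed.

Lemma sqnorm_dot {R : realType} {d : nat} (u : 'cV[R]_d) : sqnorm u = dotv u u.
Proof. by rewrite /sqnorm dotvE; apply: eq_bigr => i _; rewrite expr2. Qed.

Lemma sqnorm_ge0 {R : realType} {d : nat} (u : 'cV[R]_d) : 0 <= sqnorm u.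
Proof. by apply: sumr_ge0 => i _; rewrite sqr_ge0. Qed.

Lemma dotvC {R : realType} {d : nat} (u v : 'cV[R]_d) : dotv u v = dotv v u.
Proof. by rewrite !dotvE; apply: eq_bigr => i _; rewrite mulrC. Qed.

Lemma dotvDl {R : realType} {d : nat} (u w v : 'cV[R]_d) : dotv (u + w) v = dotv u v + dotv w v.
Proof. by rewrite !dotvE -big_split; apply: eq_bigr => i _; rewrite mxE mulrDl. Qed.

Lemma dotvZl {R : realType} {d : nat} a (u v : 'cV[R]_d) : dotv (a *: u) v = a * dotv u v.
Proof. by rewrite !dotvE mulr_sumr; apply: eq_bigr => i _; rewrite mxE mulrA. Qed.

Lemma dotvNl {R : realType} {d : nat} (u v : 'cV[R]_d) : dotv (- u) v = - dotv u v.
Proof. by rewrite -scaleN1r dotvZl mulN1r. Qed.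

Lemma dotvBl {R : realType} {d : nat} (u w v : 'cV[R]_d) : dotv (u - w) v = dotv u v - dotv w v.
Proof. by rewrite dotvDl dotvNl. Qed.

Lemma dotvDr {R : realType} {d : nat} (u w v : 'cV[R]_d) : dotv v (u + w) = dotv v u + dotv v w.
Proof. by rewrite !(dotvC v) dotvDl. Qed.
Lemma dotvZr {R : realType} {d : nat} a (u v : 'cV[R]_d) : dotv v (a *: u) = a * dotv v u.
Proof. by rewrite !(dotvC v) dotvZl. Qed.
Lemma dotvNr {R : realType} {d : nat} (u v : 'cV[R]_d) : dotv v (- u) = - dotv v u.
Proof. by rewrite !(dotvC v) dotvNl. Qed.
Lemma dotvBr {R : realType} {d : nat} (u w v : 'cV[R]_d) : dotv v (u - w) = dotv v u - dotv v w.
Proof. by rewrite !(dotvC v) dotvBl. Qed.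

Lemma dotv_suml {R : realType} {d : nat} (I : finType) (F : I -> 'cV[R]_d) v :
  dotv (\sum_i F i) v = \sum_i dotv (F i) v.
Proof.
rewrite dotvE; under eq_bigr do rewrite summxE mulr_suml.
rewrite exchange_big; apply: eq_bigr => j _; by rewrite dotvE.
Qed.

Lemma sqnormD {R : realType} {d : nat} (u v : 'cV[R]_d) :
  sqnorm (u + v) = sqnorm u + 2 * dotv u v + sqnorm v.
Proof. rewrite !sqnorm_dot dotvDl !dotvDr (dotvC v u); ring. Qed.

Lemma sqnormB {R : realType} {d : nat} (u v : 'cV[R]_d) :
  sqnorm (u - v) = sqnorm u - 2 * dotv u v + sqnorm v.
Proof. rewrite !sqnorm_dot dotvBl !dotvBr (dotvC v u); ring. Qed.

Lemma sqnormZ {R : realType} {d : nat} a (u : 'cV[R]_d) : sqnorm (a *: u) = a ^+ 2 * sqnorm u.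
Proof. rewrite !sqnorm_dot dotvZl dotvZr; ring. Qed.

Lemma sqnormN {R : realType} {d : nat} (u : 'cV[R]_d) : sqnorm (- u) = sqnorm u.
Proof. by rewrite !sqnorm_dot dotvNl dotvNr opprK. Qed.

Lemma sqnormD_le {R : realType} {d : nat} (u v : 'cV[R]_d) :
  sqnorm (u + v) <= 2 * sqnorm u + 2 * sqnorm v.
Proof.
have := sqnorm_ge0 (u - v); rewrite sqnormB sqnormD; lra.
Qed.

Lemma dot_sq_le {R : realType} {d : nat} (p x : 'cV[R]_d) :
  sqnorm p <= 1 -> dotv p x ^+ 2 <= sqnorm x.
Proof.
move=> hp; have := sqnorm_ge0 (dotv p x *: p - x).
rewrite sqnormB sqnormZ dotvZl.
have := sqnorm_ge0 p; have := sqnorm_ge0 x.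
set P := sqnorm p; set X := sqnorm x; set Q := dotv p x => h1 h2 h3.
have h4 : 0 <= (1 - P) * Q ^+ 2 by apply: mulr_ge0; [rewrite subr_ge0 | exact: sqr_ge0].
nra.
Qed.

Local Open Scope sesquilinear_scope.
Lemma min_eig_quad {R : realType} {n : nat} {B : 'M[R]_n} {lam : R} :
  B^T = B -> (forall mu, eigenvalue B mu -> lam <= mu) ->
  forall x : 'cV_n, lam * (x^T *m x) 0 0 <= (x^T *m B *m x) 0 0.
Proof.
move=> Bsym Hmin x.
pose f : {rmorphism R -> R[i]} := real_complex R.
have flec : forall a b : R, (f a <= f b) = (a <= b) := @lecR R.
have freal : forall a : R, f a \is Num.real.
  move=> a; rewrite realE -(rmorph0 f) !flec.
  exact: num_real.
have fconj : forall a : R, (f a)^* = f a by move=> a; apply/CrealP.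
set Bc := B ^ f.
have Bh : Bc \is hermsymmx.
  apply: realsym_hermsym.
    by apply/is_hermitianmxP; rewrite expr0 scale1r map_mx_id // /Bc map_trmx Bsym.
  by apply/mxOverP => i j; rewrite mxE.
have /orthomx_spectralP eB := hermitian_normalmx Bh.
have Dr := hermitian_spectral_diag_real Bh.
have PU := spectral_unitarymx Bc.
have Pu := spectral_unit Bc.
move: eB Dr PU Pu.
set P := spectralmx Bc; set D := spectral_diag Bc => eB Dr PU Pu.
have DjE : forall j, D 0 j = f (complex.Re (D 0 j)).
  move=> j; move/mxOverP: Dr => /(_ 0 j) DjR.
  by rewrite [f _]complexRe; apply/esym/Creal_ReP.
have Dge : forall j, (f lam <= D 0 j).
  move=> j; rewrite DjE flec; apply: Hmin.
  rewrite eigenvalue_root_char -(fmorph_root f) map_char_poly -/Bc.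
  rewrite -eigenvalue_root_char.
  suff : eigenvalue Bc (D 0 j) by rewrite {1}DjE.

  apply/eigenvalueP; exists (row j P).
    rewrite {1}eB !mulmxA -row_mul mulmxV // row1.
    by rewrite -rowE row_diag_mx -scalemxAl -rowE.
  apply/negP => /eqP Hr.
  have : row j (P *m invmx P) = 0 by rewrite row_mul Hr mul0mx.
  rewrite mulmxV // row1 => /matrixP /(_ 0 j); rewrite !mxE !eqxx /=.
  by move/eqP; rewrite oner_eq0.
suff : f (lam * (x^T *m x) 0 0) <= f ((x^T *m B *m x) 0 0) by rewrite flec.
have hq : forall M : 'M[R]_(1,1), f (M 0 0) = (M ^ f) 0 0 by move=> M; rewrite mxE.
rewrite rmorphM !hq !map_mxM -map_trmx -/Bc eB invmx_unitary //.
set xc := x ^ f.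
have xcT : xc^T *m P^t* = (P *m xc)^t*.
  rewrite trmx_mul map_mxM; congr (_ *m _).
  by apply/matrixP => i j; rewrite !mxE; exact: (esym (fconj _)).
have PtP : P^t* *m P = 1%:M by rewrite -invmx_unitary // mulVmx.
have E : xc^T *m xc = (P *m xc)^t* *m (P *m xc).
  by rewrite -xcT -mulmxA (mulmxA (P^t*)) PtP mul1mx.
have E2 : xc^T *m (P^t* *m diag_mx D *m P) *m xc = (P *m xc)^t* *m diag_mx D *m (P *m xc).
  by rewrite !mulmxA xcT.
rewrite E E2.
move: (P *m xc) => y.
rewrite mul_mx_diag !mxE mulr_sumr; apply: ler_sum => j _.
rewrite !mxE.
have -> : (y j 0)^* * D 0 j * y j 0 = D 0 j * ((y j 0)^* * y j 0) by ring.
rewrite -subr_ge0 -mulrBl; apply: mulr_ge0; first by rewrite subr_ge0.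
by rewrite mulrC mul_conjC_ge0.
Qed.
Local Close Scope sesquilinear_scope.
Lemma trmul_dot {R : realType} {d : nat} (w x : 'cV[R]_d) : w^T *m x = (dotv w x)%:M.
Proof. by rewrite [LHS]mx11_scalar. Qed.

Lemma Ad_mul {R : realType} {S : finType} {d : nat} (phi : S -> 'cV[R]_d) gamma {N} (s : 'I_N.+1 -> S) x :
  A_d phi gamma s *m x = N%:R^-1 *: \sum_t (dotv (phi (st s t) - gamma *: phi (st1 s t)) x *: phi (st s t)).
Proof.
rewrite /A_d -scalemxAl mulmx_suml; congr (_ *: _); apply: eq_bigr => t _.
by rewrite -mulmxA trmul_dot mul_mx_scalar.
Qed.

Lemma gTDE {R : realType} {S : finType} {d : nat} (phi : S -> 'cV[R]_d) r gamma x x' th :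
  gTD phi r gamma x x' th = r x x' *: phi x - dotv (phi x - gamma *: phi x') th *: phi x.
Proof. by rewrite /gTD dotvBl dotvZl -scalerBl; congr (_ *: _); ring. Qed.

Lemma zmod_aux (V : zmodType) (A B C : V) : (A - B) - (A - C) = - (B - C).
Proof. by rewrite [-(A - C)]opprB addrC addrA subrK opprB. Qed.

Lemma gTD_sub {R : realType} {S : finType} {d : nat} (phi : S -> 'cV[R]_d) r gamma x x' th th' :
  gTD phi r gamma x x' th - gTD phi r gamma x x' th' =
  - (dotv (phi x - gamma *: phi x') (th - th') *: phi x).
Proof. by rewrite !gTDE dotvBr scalerBl zmod_aux. Qed.

Lemma gbarE {R : realType} {S : finType} {d : nat} (phi : S -> 'cV[R]_d) r gamma {N} (s : 'I_N.+1 -> S) th :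
  A_d phi gamma s \in unitmx ->
  gbar phi r gamma s th = - (A_d phi gamma s *m (th - theta_star phi r gamma s)).
Proof.
move=> Au.
have Hb : A_d phi gamma s *m theta_star phi r gamma s = b_d phi r s.
  by rewrite /theta_star mulKVmx.
rewrite mulmxBr Hb opprB Ad_mul /b_d /gbar -scalerBr; congr (_ *: _).
rewrite -sumrB; apply: eq_bigr => t _; by rewrite gTDE.
Qed.

Lemma lmod_aux (K : pzRingType) (V : lmodType K) (th ts P Q M : V) (a : K) :
  th + a *: (- (P - Q) - M) - ts = (th - ts) + a *: (- P + (Q - M)).
Proof. by rewrite addrAC opprB addrA [Q - P]addrC. Qed.

Lemma sum_const_avg {R : realType} (N : nat) (X : R) : (0 < N)%N ->
  N%:R^-1 * \sum_(i < N) X = X.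
Proof.
move=> N0; rewrite sumr_const card_ord -[X *+ N]mulr_natl mulrA mulVf ?mul1r //.
by rewrite pnatr_eq0 -lt0n.
Qed.

Lemma dotv_sumr {R : realType} {d : nat} (I : finType) (F : I -> 'cV[R]_d) v :
  dotv v (\sum_i F i) = \sum_i dotv v (F i).
Proof. by rewrite dotvC dotv_suml; apply: eq_bigr => i _; rewrite dotvC. Qed.

Lemma avgD {R : realType} {N : nat} (F G : 'I_N -> R) :
  N%:R^-1 * \sum_i (F i + G i) = N%:R^-1 * \sum_i F i + N%:R^-1 * \sum_i G i.
Proof. by rewrite big_split mulrDr. Qed.

Lemma avgZ {R : realType} {N : nat} (k : R) (F : 'I_N -> R) :
  N%:R^-1 * \sum_i (k * F i) = k * (N%:R^-1 * \sum_i F i).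
Proof. by rewrite -mulr_sumr mulrCA. Qed.

Lemma avg_le {R : realType} {N : nat} {F G : 'I_N -> R} :
  (forall i, F i <= G i) -> N%:R^-1 * \sum_i F i <= N%:R^-1 * \sum_i G i.
Proof. by move=> h; apply: ler_wpM2l; [rewrite invr_ge0 ler0n | apply: ler_sum]. Qed.

Lemma one_step {R : realType} {S : finType} {d : nat} (phi : S -> 'cV[R]_d) r gamma {N}
  (s : 'I_N.+1 -> S) (alpha lam : R) tt th :
  0 <= gamma -> gamma < 1 -> (forall x, sqnorm (phi x) <= 1) -> (0 < N)%N ->
  A_d phi gamma s \in unitmx -> 0 <= alpha ->
  (forall x, lam * sqnorm x <= dotv x (A_d phi gamma s *m x)) ->
  N%:R^-1 * \sum_i sqnorm (inner_step phi r gamma s alpha tt th i - theta_star phi r gamma s)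
  <= (1 - 2 * alpha * lam + 8 * alpha ^+ 2) * sqnorm (th - theta_star phi r gamma s)
     + 8 * alpha ^+ 2 * sqnorm (tt - theta_star phi r gamma s).
Proof.
move=> g0 g1 hphi N0 Au a0 hquad.
set ts := theta_star phi r gamma s; set A := A_d phi gamma s.
set e := th - ts; set f := tt - ts.
pose p i := phi (st s i); pose q i := phi (st s i) - gamma *: phi (st1 s i).
pose a i := - (dotv (q i) e *: p i).
pose c i := dotv (q i) f *: p i.
pose m := A *m f.
have Hstep : forall i, inner_step phi r gamma s alpha tt th i - ts
     = e + alpha *: (a i + (c i - m)).
  move=> i; rewrite /inner_step gTD_sub gbarE // -/ts -/A -/f.
  have -> : th - tt = e - f by rewrite /e /f opprB addrA subrK.
  by rewrite dotvBr scalerBl lmod_aux.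
have Hm : \sum_i c i = N%:R *: m.
  rewrite /m /A Ad_mul scalerA mulfV ?scale1r //.
  by rewrite pnatr_eq0 -lt0n.
have Hq : forall i x, dotv (q i) x ^+ 2 <= 4 * sqnorm x.
  move=> i x; rewrite /q dotvBl dotvZl.
  have h1 := @dot_sq_le R d _ x (hphi (st s i)).
  have h2 := @dot_sq_le R d _ x (hphi (st1 s i)).
  have hg : gamma ^+ 2 <= 1 by rewrite expr_le1 // ltW.
  set u := dotv _ x in h1 *; set v := dotv _ x in h2 *.
  have := sqnorm_ge0 x; have := sqr_ge0 (u + gamma * v).
  have : gamma ^+ 2 * v ^+ 2 <= v ^+ 2 by rewrite ler_piMl ?sqr_ge0.
  nra.
set X := sqnorm e; set F := sqnorm f.
have Hterm : forall i, sqnorm (inner_step phi r gamma s alpha tt th i - ts) <=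
   X + 2 * alpha * dotv e (a i) + 2 * alpha * (dotv e (c i) - dotv e m)
   + alpha ^+ 2 * (8 * X) + alpha ^+ 2 * (2 * sqnorm (c i - m)).
  move=> i; rewrite Hstep sqnormD sqnormZ dotvZr dotvDr dotvBr -/X.
  have ha : sqnorm (a i) <= 4 * X.
    rewrite /a sqnormN sqnormZ; apply: le_trans (Hq i e).
    by apply: ler_piMr; [exact: sqr_ge0 | exact: hphi].
  have hw := sqnormD_le (a i) (c i - m).
  have := sqr_ge0 alpha; set z := alpha ^+ 2 => hz.
  have : z * sqnorm (a i + (c i - m)) <= z * (8 * X + 2 * sqnorm (c i - m)).
    by apply: ler_wpM2l => //; lra.
  lra.
apply: le_trans (avg_le Hterm) _.
rewrite !avgD !avgZ sum_const_avg //.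
have S1 : N%:R^-1 * \sum_i dotv e (a i) = - dotv e (A *m e).
  rewrite /A Ad_mul dotvZr dotv_sumr -mulrN -sumrN; congr (_ * _).
  apply: eq_bigr => i _; by rewrite /a /= dotvNr.
have S2 : N%:R^-1 * \sum_i (dotv e (c i) - dotv e m) = 0.
  rewrite sumrB -dotv_sumr Hm dotvZr sumr_const card_ord -[dotv e m *+ N]mulr_natl.
  by rewrite subrr mulr0.
have S3 : N%:R^-1 * \sum_i sqnorm (c i - m) <= 4 * F.
  have : N%:R^-1 * \sum_i sqnorm (c i - m) <= N%:R^-1 * \sum_i sqnorm (c i).
    have E : \sum_i sqnorm (c i - m) = \sum_i sqnorm (c i) - N%:R * sqnorm m.
      under eq_bigr do rewrite sqnormB.
      rewrite big_split sumrB /= -mulr_sumr -dotv_suml Hm dotvZl sumr_const card_ord.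
      rewrite -[sqnorm m *+ N]mulr_natl sqnorm_dot; ring.
    rewrite E; apply: ler_wpM2l; first by rewrite invr_ge0 ler0n.
    have := sqnorm_ge0 m; have : (0:R) <= N%:R by rewrite ler0n.
    nra.
  move/le_trans; apply.
  rewrite -[4 * F](@sum_const_avg R N) //; apply: avg_le => i.
  rewrite /c sqnormZ; apply: le_trans (Hq i f).
  by apply: ler_piMr; [exact: sqr_ge0 | exact: hphi].
rewrite S1 S2.
have := hquad e; rewrite -/X => hq.
have h1 : alpha * (lam * X) <= alpha * dotv e (A *m e) by apply: ler_wpM2l.
have h2 : alpha ^+ 2 * (2 * (N%:R^-1 * \sum_i sqnorm (c i - m))) <= alpha ^+ 2 * (8 * F).
  by apply: ler_wpM2l; [exact: sqr_ge0 | lra].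
nra.
Qed.
Lemma sum_tuple_cons {R : realType} {T : finType} {n : nat} (G : seq T -> R) :
  \sum_(t : n.+1.-tuple T) G t = \sum_(x : T) \sum_(t : n.-tuple T) G (x :: t).
Proof.
rewrite pair_big /=.
rewrite (reindex (fun p : T * n.-tuple T => [tuple of p.1 :: p.2])) /=; first by [].
exists (fun t : n.+1.-tuple T => (thead t, [tuple of behead t])).
  by move=> [x t] _ /=; congr (_, _); apply: val_inj.
by move=> t _; apply: val_inj => /=; rewrite [in RHS](tuple_eta t).
Qed.

Lemma sum_tuple_rev {R : realType} {T : finType} {n : nat} (G : seq T -> R) :
  \sum_(t : n.-tuple T) G (rev t) = \sum_(t : n.-tuple T) G t.
Proof.
rewrite [RHS](reindex (fun t : n.-tuple T => [tuple of rev t])) //=.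
exists (fun t : n.-tuple T => [tuple of rev t]) => t _; apply: val_inj => /=; by rewrite revK.
Qed.

Lemma sum_tuple_rcons {R : realType} {T : finType} {n : nat} (G : seq T -> R) :
  \sum_(t : n.+1.-tuple T) G t = \sum_(t : n.-tuple T) \sum_(x : T) G (rcons t x).
Proof.
rewrite -sum_tuple_rev (sum_tuple_cons (fun s => G (rev s))) exchange_big /=.
have -> : \sum_(t : n.-tuple T) \sum_(x : T) G (rev (x :: t)) =
   \sum_(t : n.-tuple T) (fun s => \sum_(x : T) G (rcons s x)) (rev t).
  by apply: eq_bigr => t _; apply: eq_bigr => x _; rewrite rev_cons.
exact: (sum_tuple_rev (fun s => \sum_(x : T) G (rcons s x))).
Qed.

Lemma sum_tuple_take {R : realType} {T : finType} (G : seq T -> R) (M k : nat) :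
  (k <= M)%N ->
  \sum_(t : M.-tuple T) G (take k t) = (#|T| ^ (M - k))%:R * \sum_(t : k.-tuple T) G t.
Proof.
elim: M => [|M IH] hk.
  move: hk; rewrite leqn0 => /eqP ->; rewrite subnn expn0 mul1r.
  by apply: eq_bigr => t _; rewrite take_oversize // size_tuple.
case: (ltngtP k M.+1) hk => // [hlt _|-> _].
  rewrite (sum_tuple_rcons (fun s => G (take k s))).
  have -> : (M.+1 - k = (M - k).+1)%N by rewrite subSn.
  rewrite expnS natrM -mulrA -IH //.
  rewrite mulr_sumr; apply: eq_bigr => t _.
  rewrite (eq_bigr (fun _ => G (take k t))); last first.
    by move=> x _; rewrite -cats1 takel_cat // size_tuple.
  by rewrite sumr_const mulr_natl.
rewrite subnn expn0 mul1r.
by apply: eq_bigr => t _; rewrite take_oversize // size_tuple.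
Qed.

Lemma sum_tuple0 {R : realType} {T : finType} (G : seq T -> R) :
  \sum_(t : 0.-tuple T) G t = G [::].
Proof.
rewrite (eq_bigr (fun _ => G [::])); last by move=> t _; rewrite tuple0.
by rewrite sumr_const card_tuple expn0.
Qed.

Lemma epoch_bound {R : realType} {S : finType} {d : nat} (phi : S -> 'cV[R]_d) r gamma {N}
  (s : 'I_N.+1 -> S) (alpha lam : R) (M : nat) tt :
  0 <= gamma -> gamma < 1 -> (forall x, sqnorm (phi x) <= 1) -> (0 < N)%N ->
  A_d phi gamma s \in unitmx -> 0 <= alpha ->
  (forall x, lam * sqnorm x <= dotv x (A_d phi gamma s *m x)) ->
  (0 < M)%N -> 0 < 2 * alpha * lam - 8 * alpha ^+ 2 ->
  M%:R * (2 * alpha * lam - 8 * alpha ^+ 2) *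
    (#|Omega N M|%:R^-1 * \sum_(w : Omega N M)
        sqnorm (epoch phi r gamma s alpha tt w - theta_star phi r gamma s))
  <= (1 + 8 * alpha ^+ 2 * M%:R) * sqnorm (tt - theta_star phi r gamma s).
Proof.
move=> g0 g1 hphi N0 Au a0 hquad M0 c0.
set ts := theta_star phi r gamma s; set c := 2 * alpha * lam - 8 * alpha ^+ 2.
set F := sqnorm (tt - ts); set b := 8 * alpha ^+ 2 * F.
pose g (l : seq 'I_N) := sqnorm (foldl (inner_step phi r gamma s alpha tt) tt l - ts).
pose G k := ((N ^ k)%:R)^-1 * \sum_(t : k.-tuple 'I_N) g t.
have NkP : forall k, (0 : R) < (N ^ k)%:R by move=> k; rewrite ltr0n expn_gt0 N0.
have G0 : G 0%N = F by rewrite /G sum_tuple0 expn0 invr1 mul1r.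
have Gge0 : forall k, 0 <= G k.
  move=> k; apply: mulr_ge0; first by rewrite invr_ge0 ltW.
  by apply: sumr_ge0 => t _; exact: sqnorm_ge0.
have Gstep : forall k, G k.+1 <= (1 - c) * G k + b.
  move=> k; rewrite /G (sum_tuple_rcons g) expnS natrM invfM [N%:R^-1 * _]mulrC -mulrA.
  rewrite mulr_sumr.
  have -> : (1 - c) * ((N ^ k)%:R^-1 * \sum_(t : k.-tuple 'I_N) g t) + b =
      (N ^ k)%:R^-1 * \sum_(t : k.-tuple 'I_N) ((1 - c) * g t + b).
    rewrite big_split /= mulrDr -mulr_sumr mulrCA; congr (_ + _).
    rewrite sumr_const card_tuple card_ord -[b *+ _]mulr_natl mulrA mulVf ?mul1r //.
    by rewrite gt_eqF.
  apply: ler_wpM2l; first by rewrite invr_ge0 ltW.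
  apply: ler_sum => t _.
  have := one_step phi r gamma s alpha lam tt (foldl (inner_step phi r gamma s alpha tt) tt t) g0 g1 hphi N0 Au a0 hquad.
  rewrite /g /= => h; under eq_bigr do rewrite foldl_rcons.
  have -> : 1 - c = 1 - 2 * alpha * lam + 8 * alpha ^+ 2 by rewrite /c; ring.
  exact: h.
have Tel : forall K, c * (\sum_(k < K) G k) + G K <= F + K%:R * b.
  elim=> [|K IH]; first by rewrite big_ord0 mulr0 add0r G0 mul0r addr0.
  rewrite big_ord_recr /= mulrDr -addrA.
  have := Gstep K; rewrite -natr1 => h; lra.
have Eavg : #|Omega N M|%:R^-1 * \sum_(w : Omega N M)
        sqnorm (epoch phi r gamma s alpha tt w - ts) = M%:R^-1 * \sum_(k < M) G k.
  have E1 : \sum_(w : Omega N M) sqnorm (epoch phi r gamma s alpha tt w - ts) =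
      \sum_(idx : M.-tuple 'I_N) \sum_(k : 'I_M) g (take k idx).
    by rewrite [RHS]pair_big.
  have E2 : forall k : 'I_M, \sum_(idx : M.-tuple 'I_N) g (take k idx) = (N ^ M)%:R * G k.
    move=> k; rewrite sum_tuple_take; last exact: ltnW.
    rewrite /G mulrA card_ord; congr (_ * _).
    have -> : (N ^ M = N ^ (M - k) * N ^ k)%N by rewrite -expnD subnK // ltnW.
    by rewrite natrM mulfK // gt_eqF.
  rewrite E1 exchange_big /=.
  under eq_bigr do rewrite E2.
  rewrite -mulr_sumr /Omega card_prod card_tuple !card_ord natrM invfM.
  have hM : M%:R != 0 :> R by rewrite pnatr_eq0 -lt0n.
  have hN : (N ^ M)%:R != 0 :> R by rewrite gt_eqF.
  by field; rewrite hM hN.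
rewrite Eavg.
have := Tel M; have := Gge0 M.
have -> : M%:R * c * (M%:R^-1 * \sum_(k < M) G k) = c * \sum_(k < M) G k.
  by field; rewrite pnatr_eq0 -lt0n.
rewrite /b; lra.
Qed.

Lemma quad_from_eig {R : realType} {d : nat} {A : 'M[R]_d} {lam : R} :
  is_min_eigenvalue (sym_part A) lam ->
  forall x, lam * sqnorm x <= dotv x (A *m x).
Proof.
move=> [_ Hmin] x.
have Hsym : (sym_part A)^T = sym_part A.
  by rewrite /sym_part linearZ /= linearD /= trmxK addrC.
have := min_eig_quad Hsym Hmin x.
have tA : x^T *m A^T *m x = x^T *m A *m x.
  have -> : x^T *m A^T *m x = (x^T *m A *m x)^T by rewrite !trmx_mul trmxK mulmxA.
  by apply/matrixP => i j; rewrite !ord1 mxE.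
have -> : (x^T *m sym_part A *m x) 0 0 = dotv x (A *m x).
  rewrite /sym_part /dotv mulmxA -scalemxAr -scalemxAl mulmxDr mulmxDl tA.
  set P := x^T *m A *m x.
  rewrite mxE [(P + P) 0 0]mxE; by field.
by rewrite sqnorm_dot.
Qed.

Theorem proposition1 (R : realType) (S : finType) (d : nat)
  (phi : S -> 'cV[R]_d) (r : S -> S -> R) (gamma : R)
  (N : nat) (s : 'I_N.+1 -> S) (lamA : R) (M : nat) :
  0 <= gamma -> gamma < 1 ->
  (forall x : S, sqnorm (phi x) <= 1) ->
  (0 < N)%N ->
  A_d phi gamma s \in unitmx ->
  is_min_eigenvalue (sym_part (A_d phi gamma s)) lamA ->
  0 < lamA ->
  M%:R = 32 / lamA ^+ 2 ->
  forall (m : nat) (theta0 : 'cV[R]_d),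
    Exp_iter phi r gamma s (lamA / 32) M m
      (fun th => sqnorm (th - theta_star phi r gamma s)) theta0
    <= (5 / 7) ^+ m * sqnorm (theta0 - theta_star phi r gamma s).
Proof.
move=> g0 g1 hphi N0 Au Heig l0 HM.
have hquad := quad_from_eig Heig.
set ts := theta_star phi r gamma s.
set alpha := lamA / 32.
set f := fun th => sqnorm (th - ts).
have M0 : (0 < M)%N.
  rewrite lt0n; apply/negP => /eqP M0; move: HM; rewrite M0 /=.
  have : 0 < 32 / lamA ^+ 2 by apply: divr_gt0 => //; exact: exprn_gt0.
  by move=> h1 h2; rewrite -h2 ltxx in h1.
have a0 : 0 <= alpha by rewrite /alpha divr_ge0 // ltW.
have c0 : 0 < 2 * alpha * lamA - 8 * alpha ^+ 2.
  rewrite /alpha; have := exprn_gt0 2 l0; rewrite expr2 => h; nra.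
set K := #|Omega N M|%:R : R.
have K0 : 0 < K.
  rewrite /K ltr0n /Omega card_prod card_tuple !card_ord muln_gt0 M0 andbT.
  by rewrite expn_gt0 N0.
have Hep : forall tt, K^-1 * \sum_(w : Omega N M) f (epoch phi r gamma s alpha tt w)
     <= 5 / 7 * f tt.
  move=> tt.
  have := epoch_bound phi r gamma s alpha lamA M tt g0 g1 hphi N0 Au a0 hquad M0 c0.
  rewrite -/ts -/K -/(f tt).
  have -> : 1 + 8 * alpha ^+ 2 * M%:R = 5 / 4.
    by rewrite HM /alpha; field; rewrite gt_eqF.
  have -> : M%:R * (2 * alpha * lamA - 8 * alpha ^+ 2) = 7 / 4.
    by rewrite HM /alpha; field; rewrite gt_eqF.
  move=> h; have := sqnorm_ge0 (tt - ts); rewrite -/(f tt) => hf.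
  lra.
elim=> [|m IH] th.
  rewrite /Exp_iter /run (sum_tuple0 (fun l => f (foldl (epoch phi r gamma s alpha (M:=M)) th l))).
  by rewrite card_tuple expn0 invr1 ?expr0 !mul1r.
rewrite /Exp_iter /run.
rewrite (sum_tuple_cons (fun l => f (foldl (epoch phi r gamma s alpha (M:=M)) th l))) /=.
rewrite card_tuple -/K.
have inner : forall x, \sum_(t : m.-tuple (Omega N M))
    f (foldl (epoch phi r gamma s alpha (M:=M)) (epoch phi r gamma s alpha (M:=M) th x) t)
   = K ^+ m * Exp_iter phi r gamma s alpha M m f (epoch phi r gamma s alpha (M:=M) th x).
  move=> x; rewrite /Exp_iter /run card_tuple natrX -/K mulrA mulfV ?mul1r //.
  by rewrite expf_neq0 // gt_eqF.
under eq_bigr do rewrite inner.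
rewrite -mulr_sumr natrX -/K.
have -> : (K ^+ m.+1)^-1 * (K ^+ m * \sum_x Exp_iter phi r gamma s alpha M m f
      (epoch phi r gamma s alpha (M:=M) th x)) =
    K^-1 * \sum_x Exp_iter phi r gamma s alpha M m f (epoch phi r gamma s alpha (M:=M) th x).
  by rewrite exprS; field; rewrite -/K expf_neq0 ?andbT gt_eqF.
apply: le_trans.
  apply: ler_wpM2l; first by rewrite invr_ge0 ltW.
  apply: ler_sum => x _; exact: IH.
rewrite -mulr_sumr mulrCA exprSr -mulrA; apply: ler_wpM2l.
  by apply: exprn_ge0; lra.
exact: Hep.
Qed.
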